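(* Let $K$ be a compact Hausdorff space without isolated points and let $X$ be a closed subspace of $C(K)$. The following are equivalent: (a) The pair $(X,C(K))$ has the Daugavet property. (b) For every $\varepsilon>0$, every $x^*\in S(X^* )$ and every nonempty open set $U\subset K$ there is a point $u\in U$ with $\|x^*+\delta_u^*|_X\|>2-\varepsilon$. (c) For every $x^*\in S(X^* )$ and every nonempty open set $U\subset K$ there is a nonempty closed $G_\delta$-set $G\subset U$ such that $\|x^*+\delta_u^*|_X\|=2$ for every $u\in G$.
   Context: $C(K)$ is the space of real continuous functions on $K$ with the sup norm. For $k\in K$, $\delta_k^*\in C(K)^*$ is the evaluation functional $\delta_k^*(f)=f(k)$, and $\delta_k^*|_X$ its restriction to $X$. $S(X^* )$ is the unit sphere of $X^*$. If $X$ is a closed subspace of a Banach space $Y$ with inclusion $J$, the pair $(X,Y)$ has the Daugavet property if every bounded rank-one linear operator $T:X\to Y$ satisfies $\|J+T\|=1+\|T\|$. *)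

(* Defs.v *)
From HB Require Import structures.
From mathcomp Require Import all_boot all_order all_algebra.
From mathcomp Require Import all_classical all_reals all_analysis.
Set Implicit Arguments. Unset Strict Implicit. Unset Printing Implicit Defensive.
Import Order.TTheory GRing.Theory Num.Theory numFieldNormedType.Exports.
Local Open Scope classical_set_scope.
Local Open Scope ring_scope.

Section Defs.
Context {R : realType} {K : topologicalType}.

Definition supnorm (f : K -> R) : R := sup [set `|f k| | k in [set: K]].

(* X is a closed linear subspace of C(K) (elements represented as
   continuous functions K -> R, with sup-norm). *)
Definition closed_subspace_CK (X : set (K -> R)) : Prop :=
  [/\ (forall f, X f -> continuous f),
      X (fun _ => 0),
      (forall f g, X f -> X g -> X (f \+ g)),
      (forall (c : R) f, X f -> X (fun k => c * f k)) &
      (forall f, continuous f ->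
         (forall e : R, 0 < e -> exists g, X g /\ supnorm (f \- g) < e) ->
         X f)].

Definition dual_norm (X : set (K -> R)) (phi : (K -> R) -> R) : R :=
  sup [set `|phi f| | f in [set f | X f /\ supnorm f <= 1]].

Definition in_dual (X : set (K -> R)) (phi : (K -> R) -> R) : Prop :=
  [/\ (forall f g, X f -> X g -> phi (f \+ g) = phi f + phi g),
      (forall (c : R) f, X f -> phi (fun k => c * f k) = c * phi f) &
      (exists M : R, forall f, X f -> `|phi f| <= M * supnorm f)].

Definition in_dual_sphere (X : set (K -> R)) (phi : (K -> R) -> R) : Prop :=
  in_dual X phi /\ dual_norm X phi = 1.

(* the evaluation functional delta_k^* (restricted to X when normed over X) *)
Definition delta (k : K) : (K -> R) -> R := fun f => f k.

Definition rank_one_op (X : set (K -> R)) (T : (K -> R) -> (K -> R)) : Prop :=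
  [/\ (forall f, X f -> continuous (T f)),
      (forall f g, X f -> X g -> T (f \+ g) = T f \+ T g),
      (forall (c : R) f, X f -> T (fun k => c * f k) = (fun k => c * T f k)),
      (exists M : R, forall f, X f -> supnorm (T f) <= M * supnorm f) &
      (exists g : K -> R, [/\ continuous g, g <> (fun _ => 0),
        (forall f, X f -> exists c : R, T f = (fun k => c * g k)) &
        (exists f, X f /\ T f <> (fun _ => 0))])].

Definition op_norm (X : set (K -> R)) (S : (K -> R) -> (K -> R)) : R :=
  sup [set supnorm (S f) | f in [set f | X f /\ supnorm f <= 1]].

Definition daugavet_pair (X : set (K -> R)) : Prop :=
  forall T, rank_one_op X T ->
    op_norm X (fun f => f \+ T f) = 1 + op_norm X T.

Definition Gdelta (G : set K) : Prop :=
  exists O : nat -> set K, (forall n, open (O n)) /\ G = \bigcap_n O n.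

End Defs.

(* Main.v *)
Require Import Defs.
From HB Require Import structures.
From mathcomp Require Import all_boot all_order all_algebra.
From mathcomp Require Import all_classical all_reals all_analysis.
From mathcomp Require Import lra ring.
Import Order.TTheory GRing.Theory Num.Theory numFieldNormedType.Exports.
Local Open Scope classical_set_scope.
Local Open Scope ring_scope.

Section Aux.
Context {R : realType} {K : topologicalType}.

Lemma gen_ub (T : Type) (D : set T) (F : T -> R) (B : R) x :
  (forall y, D y -> F y <= B) -> D x -> F x <= sup [set F y | y in D].
Proof.
move=> hB Dx; apply: sup_upper_bound; last by exists x.
split; first by exists (F x); exists x.
by exists B => _ [y Dy <-]; exact: hB.
Qed.

Lemma gen_le (T : Type) (D : set T) (F : T -> R) (c : R) :
  D !=set0 -> (forall y, D y -> F y <= c) -> sup [set F y | y in D] <= c.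
Proof.
move=> [x Dx] h; apply: ge_sup; first by exists (F x); exists x.
by move=> _ [y Dy <-]; exact: h.
Qed.

Lemma gen_adh (T : Type) (D : set T) (F : T -> R) (c : R) :
  D !=set0 -> c < sup [set F y | y in D] -> exists2 y, D y & c < F y.
Proof.
move=> hD hc; apply: contrapT => hn.
have : sup [set F y | y in D] <= c.
  apply: gen_le => // y Dy; rewrite leNgt; apply/negP => hy; apply: hn.
  by exists y.
by rewrite leNgt hc.
Qed.

Lemma supnorm_le (f : K -> R) (c : R) :
  0 <= c -> (forall k, `|f k| <= c) -> supnorm f <= c.
Proof.
move=> c0 h; case: (pselect (exists k : K, True)) => [[k _]|hn].
  by rewrite /supnorm; apply: gen_le => //; exists k.
rewrite /supnorm; have -> : [set `|f k| | k in [set: K]] = set0.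
  by apply/seteqP; split => // x [k _ _]; apply: hn; exists k.
by rewrite sup0.
Qed.

Lemma le_supnorm (f : K -> R) k :
  (exists M, forall k, `|f k| <= M) -> `|f k| <= supnorm f.
Proof. move=> [M hM]; rewrite /supnorm. by apply: (@gen_ub _ _ (fun k => `|f k|) M). Qed.

Lemma supnorm_adh (f : K -> R) (c : R) :
  0 <= c -> c < supnorm f -> exists k, c < `|f k|.
Proof.
move=> c0 hc; apply: contrapT => hn.
have : supnorm f <= c.
  apply: supnorm_le => // k; rewrite leNgt; apply/negP => hk; apply: hn.
  by exists k.
by rewrite leNgt hc.
Qed.

Lemma cont_bnd (cK : compact [set: K]) (f : K -> R) :
  continuous f -> exists M, forall k, `|f k| <= M.
Proof.
move=> cf.
have : compact [set f k | k in [set: K]].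
  by apply: continuous_compact => //; exact: continuous_subspaceT.
move/compact_bounded => [M0 [_ hM0]].
exists (`|M0| + 1) => k; apply: (hM0 (`|M0| + 1)).
  by rewrite (le_lt_trans (ler_norm M0)) // ltrDl.
by exists k.
Qed.


Lemma supnorm_ge0 (f : K -> R) :
  (exists M, forall k, `|f k| <= M) -> 0 <= supnorm f.
Proof.
move=> hb; case: (pselect (exists k : K, True)) => [[k _]|hn].
  exact: le_trans (normr_ge0 (f k)) (le_supnorm f k hb).
rewrite /supnorm; have -> : [set `|f k| | k in [set: K]] = set0.
  by apply/seteqP; split => // x [k _ _]; apply: hn; exists k.
by rewrite sup0.
Qed.

Lemma cont_scal (g : K -> R) (c : R) :
  continuous g -> continuous (fun k => c * g k).
Proof.
move=> cg x.
have h1 : {for x, continuous (fun=> c)} by apply: cst_continuous.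
have := continuousM h1 (cg x).
by [].
Qed.

Lemma cont_add (f g : K -> R) :
  continuous f -> continuous g -> continuous (f \+ g).
Proof. by move=> cf cg x; exact: (continuousD (cf x) (cg x)). Qed.


Lemma ball_ne {X : set (K -> R)} : closed_subspace_CK X ->
  [set f | X f /\ supnorm f <= 1] !=set0.
Proof.
case=> _ X0 _ _ _; exists (fun _ => 0); split => //.
by apply: supnorm_le => // k; rewrite normr0.
Qed.

Lemma X_bnd (cK : compact [set: K]) {X : set (K -> R)} {f} :
  closed_subspace_CK X -> X f -> exists M, forall k, `|f k| <= M.
Proof. by case=> hc _ _ _ _ Xf; apply: cont_bnd => //; exact: hc. Qed.

Lemma X_sn_ge0 (cK : compact [set: K]) {X : set (K -> R)} {f} :
  closed_subspace_CK X -> X f -> 0 <= supnorm f.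
Proof. by move=> hX Xf; apply: supnorm_ge0; exact: (X_bnd cK hX Xf). Qed.

Lemma dual_bnd (cK : compact [set: K]) {X : set (K -> R)} {phi} :
  closed_subspace_CK X -> in_dual X phi ->
  exists B, forall f, X f -> supnorm f <= 1 -> `|phi f| <= B.
Proof.
move=> hX [_ _ [M hM]]; exists `|M| => f Xf sf.
have s0 := X_sn_ge0 cK hX Xf.
have := hM f Xf; have := ler_norm M; have := normr_ge0 M.
move: (supnorm f) s0 sf => s s0 s1 h1 h2 h3; nra.
Qed.

Lemma dn_ub (cK : compact [set: K]) {X : set (K -> R)} {phi f} :
  closed_subspace_CK X -> in_dual X phi -> X f -> supnorm f <= 1 ->
  `|phi f| <= dual_norm X phi.
Proof.
move=> hX hphi Xf sf; have [B hB] := dual_bnd cK hX hphi.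
rewrite /dual_norm; apply: (@gen_ub _ _ (fun f => `|phi f|) B) => //.
by move=> y [Xy sy]; exact: hB.
Qed.

Lemma dn_le {X : set (K -> R)} {phi} c :
  closed_subspace_CK X ->
  (forall f, X f -> supnorm f <= 1 -> `|phi f| <= c) -> dual_norm X phi <= c.
Proof.
move=> hX h; rewrite /dual_norm; apply: gen_le; first exact: ball_ne.
by move=> y [Xy sy]; exact: h.
Qed.

Lemma dn_adh {X : set (K -> R)} {phi} c :
  closed_subspace_CK X -> c < dual_norm X phi ->
  exists f, [/\ X f, supnorm f <= 1 & c < `|phi f|].
Proof.
move=> hX hc; have [f [Xf sf] hf] := @gen_adh _ _ (fun f => `|phi f|) c (ball_ne hX) hc.
by exists f.
Qed.

Lemma in_dual_scale {X : set (K -> R)} {phi} (a : R) :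
  in_dual X phi -> in_dual X (fun f => a * phi f).
Proof.
case=> hadd hhom [M hM]; split.
- by move=> f g Xf Xg; rewrite hadd // mulrDr.
- by move=> c f Xf; rewrite hhom // mulrCA.
exists (`|a| * M) => f Xf; rewrite normrM -mulrA.
by rewrite ler_wpM2l // hM.
Qed.

Lemma dn_scale (cK : compact [set: K]) {X : set (K -> R)} {phi} (a : R) :
  closed_subspace_CK X -> in_dual X phi -> a != 0 ->
  dual_norm X (fun f => a * phi f) = `|a| * dual_norm X phi.
Proof.
move=> hX hphi a0; have ha : 0 < `|a| by rewrite normr_gt0.
apply/eqP; rewrite eq_le; apply/andP; split.
  apply: dn_le => // f Xf sf; rewrite normrM ler_wpM2l //.
  exact: dn_ub.
rewrite -ler_pdivlMl //; apply: dn_le => // f Xf sf.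
rewrite ler_pdivlMl // -normrM.
exact: (dn_ub cK hX (in_dual_scale a hphi)).
Qed.


Lemma dn_ub_gen {X : set (K -> R)} {psi f} :
  (exists B, forall f, X f -> supnorm f <= 1 -> `|psi f| <= B) ->
  X f -> supnorm f <= 1 -> `|psi f| <= dual_norm X psi.
Proof.
move=> [B hB] Xf sf; rewrite /dual_norm.
apply: (@gen_ub _ _ (fun f => `|psi f|) B) => //.
by move=> y [Xy sy]; exact: hB.
Qed.

Lemma on_ub {X : set (K -> R)} {S f} :
  (exists B, forall f, X f -> supnorm f <= 1 -> supnorm (S f) <= B) ->
  X f -> supnorm f <= 1 -> supnorm (S f) <= op_norm X S.
Proof.
move=> [B hB] Xf sf; rewrite /op_norm.
apply: (@gen_ub _ _ (fun f => supnorm (S f)) B) => //.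
by move=> y [Xy sy]; exact: hB.
Qed.

Lemma on_le {X : set (K -> R)} {S} c :
  closed_subspace_CK X ->
  (forall f, X f -> supnorm f <= 1 -> supnorm (S f) <= c) -> op_norm X S <= c.
Proof.
move=> hX h; rewrite /op_norm; apply: gen_le; first exact: ball_ne.
by move=> y [Xy sy]; exact: h.
Qed.

Lemma on_adh {X : set (K -> R)} {S} c :
  closed_subspace_CK X -> c < op_norm X S ->
  exists f, [/\ X f, supnorm f <= 1 & c < supnorm (S f)].
Proof.
move=> hX hc.
have [f [Xf sf] hf] := @gen_adh _ _ (fun f => supnorm (S f)) c (ball_ne hX) hc.
by exists f.
Qed.

Lemma ball_pt (cK : compact [set: K]) {X : set (K -> R)} {f} u :
  closed_subspace_CK X -> X f -> supnorm f <= 1 -> `|f u| <= 1.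
Proof.
by move=> hX Xf sf; apply: le_trans sf; apply: le_supnorm; exact: X_bnd hX Xf.
Qed.

Definition propB (X : set (K -> R)) :=
  forall (e : R) (phi : (K -> R) -> R) (U : set K),
    0 < e -> in_dual_sphere X phi -> open U -> U !=set0 ->
    exists2 u, U u & dual_norm X (fun f => phi f + delta u f) > 2 - e.

Lemma key (cK : compact [set: K]) (X : set (K -> R)) (hX : closed_subspace_CK X)
  (hb : propB X) phi H T (t eps : R) w0 :
  in_dual_sphere X phi -> continuous H ->
  (forall f, X f -> T f = (fun k => phi f * H k)) ->
  (exists B, forall f, X f -> supnorm f <= 1 -> supnorm (f \+ T f) <= B) ->
  0 < eps -> eps < 1 -> eps < t -> t - eps < H w0 ->
  1 + t - eps * (2 + t) <= op_norm X (fun f => f \+ T f).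
Proof.
move=> hphi cH hT hB e0 e1 et hw0.
pose U := [set w | t - eps < H w].
have oU : open U.
  have -> : U = H @^-1` [set x | t - eps < x] by [].
  by apply: open_comp; [move=> x _; exact: cH | exact: open_gt].
have [u Uu hu] := hb eps phi U e0 hphi oU (ex_intro _ w0 hw0).
have [f [Xf sf hf]] := dn_adh _ hX hu.
have hXc := hX; case: hXc => hc _ _ hhom _.
have main : forall g, X g -> supnorm g <= 1 -> 2 - eps < phi g + g u ->
    1 + t - eps * (2 + t) <= op_norm X (fun f => f \+ T f).
  move=> g Xg sg hg.
  have h1 : `|phi g| <= 1 by case: hphi => hd <-; exact: dn_ub.
  have h2 : `|g u| <= 1 by exact: (ball_pt cK u hX Xg sg).
  have h3 : supnorm (g \+ T g) <= op_norm X (fun f => f \+ T f).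
    exact: (on_ub hB Xg sg).
  have cgT : continuous (g \+ T g).
    by apply: cont_add; [exact: hc | rewrite hT //; exact: cont_scal].
  have h4 : `|g u + phi g * H u| <= supnorm (g \+ T g).
    have -> : g u + phi g * H u = (g \+ T g) u by rewrite /= hT.
    exact: (le_supnorm (g \+ T g) u (cont_bnd cK _ cgT)).
  have h5 := ler_norm (g u + phi g * H u).
  have ha : g u <= 1 by apply: le_trans h2; exact: ler_norm.
  have hb' : phi g <= 1 by apply: le_trans h1; exact: ler_norm.
  have h8 : t - eps < H u by [].
  have hgu : 1 - eps < g u by lra.
  have hpg : 1 - eps < phi g by lra.
  have hbv : (1 - eps) * (t - eps) <= phi g * H u.
    have p1 : 0 <= (phi g - (1 - eps)) * (H u - (t - eps)) by apply: mulr_ge0; lra.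
    nra.
  nra.
case: (lerP 0 (phi f + f u)) => hs.
  by apply: (main f) => //; rewrite ger0_norm in hf.
apply: (main (fun k => -1 * f k)); first exact: hhom.
  apply: supnorm_le => // k; rewrite normrM normrN1 mul1r.
  apply: le_trans sf; apply: le_supnorm; exact: X_bnd hX Xf.
case: hphi => -[_ hh _] _; rewrite hh //.
by rewrite ltr0_norm // in hf; rewrite /delta in hf; lra.
Qed.


Lemma star (cK : compact [set: K]) (X : set (K -> R)) (hX : closed_subspace_CK X)
  (hb : propB X) T (M : R) (g : K -> R) :
  (forall f, X f -> continuous (T f)) ->
  (forall f g, X f -> X g -> T (f \+ g) = T f \+ T g) ->
  (forall (c : R) f, X f -> T (fun k => c * f k) = (fun k => c * T f k)) ->
  (forall f, X f -> supnorm (T f) <= M * supnorm f) ->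
  (forall f, X f -> exists c : R, T f = (fun k => c * g k)) ->
  (exists B, forall f, X f -> supnorm f <= 1 -> supnorm (f \+ T f) <= B) ->
  forall f1, X f1 -> supnorm f1 <= 1 -> T f1 <> (fun _ => 0) ->
  1 + supnorm (T f1) <= op_norm X (fun f => f \+ T f).
Proof.
move=> hcT haddT hhomT hM hrange hBJ f1 Xf1 sf1 hne.
have hXc := hX; case: hXc => hc X0 Xadd Xhom _.
pose h := T f1.
have [k0 hk0] : exists k0, h k0 != 0.
  apply: contrapT => hn; apply: hne; apply/funext => k.
  apply/eqP; apply: contrapT => hk; apply: hn; exists k; exact/negP.
pose psi f := T f k0 / h k0.
have hpsi : forall f, X f -> T f = (fun k => psi f * h k).
  move=> f Xf; have [c hcf] := hrange f Xf; have [c1 hc1] := hrange f1 Xf1.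
  have hk0' := hk0; rewrite /h hc1 mulf_eq0 negb_or in hk0'.
  case/andP: hk0' => c10 g0.
  apply/funext => k; rewrite /psi /h hcf hc1 /=.
  by field; rewrite c10 g0.
have hk0p : 0 < `|h k0| by rewrite normr_gt0.
have hpsid : in_dual X psi.
  split.
  - by move=> f f' Xf Xf'; rewrite /psi haddT //= mulrDl.
  - by move=> c f Xf; rewrite /psi hhomT //= mulrA.
  exists (M / `|h k0|) => f Xf; rewrite /psi normrM normfV.
  rewrite mulrAC; apply: ler_wpM2r; first by rewrite invr_ge0.
  apply: le_trans (hM f Xf); apply: le_supnorm; apply: cont_bnd => //.
  exact: hcT.
have psi1 : psi f1 = 1 by rewrite /psi divff.
pose N := dual_norm X psi.
have N1 : 1 <= N.
  by have := dn_ub cK hX hpsid Xf1 sf1; rewrite psi1 normr1.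
have N0 : N != 0 by apply/eqP => hN; rewrite hN in N1; lra.
pose t := supnorm h.
have ch : continuous h by exact: hcT.
have tk0 : `|h k0| <= t by apply: le_supnorm; exact: cont_bnd.
apply/ler_addgt0Pr => e e0.
pose eps := Num.min (Num.min (1/2) (t/2)) (e / (2 + t)).
have t0 : 0 < t by lra.
have ep0 : 0 < eps.
  rewrite /eps !lt_min; apply/andP; split; [apply/andP; split|];
    [lra | lra | apply: divr_gt0; lra].
have ep1 : eps <= 1/2 by rewrite /eps !ge_min lexx.
have ept : eps <= t/2 by rewrite /eps !ge_min lexx orbT.
have epe : eps * (2 + t) <= e.
  have : eps <= e / (2 + t) by rewrite /eps ge_min lexx orbT.
  have p : 0 < 2 + t by lra.
  by rewrite ler_pdivlMr.
have [w0 hw0] : exists w0, t - eps < `|h w0|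
  by apply: (supnorm_adh h (t - eps)); rewrite -/t; lra.
pose sg : R := if 0 <= h w0 then 1 else -1.
have sgh : sg * h w0 = `|h w0|.
  rewrite /sg; case: ifP => hh.
    by rewrite mul1r ger0_norm.
  by rewrite mulN1r ltr0_norm // ltNge hh.
have sg2 : sg * sg = 1 by rewrite /sg; case: ifP => _; rewrite ?mulr1 ?mulrNN ?mulr1.
have sgn : `|sg| = 1 by rewrite /sg; case: ifP => _; rewrite ?normrN normr1.
pose phi f := sg / N * psi f.
pose H k := (sg * N) * h k.
have hphi : in_dual_sphere X phi.
  split; first exact: in_dual_scale.
  rewrite /phi (dn_scale cK _ hX hpsid); last first.
    by rewrite mulf_eq0 negb_or invr_eq0 N0 andbT; apply/eqP => s0;
      rewrite s0 mul0r in sg2; lra.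
  rewrite normrM sgn mul1r normfV ger0_norm; last lra.
  by rewrite mulVf.
have cH : continuous H by exact: cont_scal.
have hTH : forall f, X f -> T f = (fun k => phi f * H k).
  move=> f Xf; rewrite hpsi //; apply/funext => k; rewrite /phi /H.
  have -> : sg / N * psi f * (sg * N * h k) = (sg * sg) * (N / N) * (psi f * h k)
    by rewrite mulrC; ring.
  by rewrite sg2 divff // !mul1r.
have Hw0 : t - eps < H w0.
  rewrite /H -mulrA (mulrC N) mulrA sgh.
  apply: (lt_le_trans hw0); rewrite -[leLHS]mulr1 ler_wpM2l //.
have e1 : eps < 1 by lra.
have et : eps < t by lra.
have := @key cK X hX hb phi H T t eps w0 hphi cH hTH hBJ ep0 e1 et Hw0.
rewrite -/h -/t; lra.
Qed.


Lemma BtoA (cK : compact [set: K]) (X : set (K -> R)) (hX : closed_subspace_CK X)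
  (hb : propB X) : daugavet_pair X.
Proof.
move=> T [hcT haddT hhomT [M hM] [g [cg gn0 hrange [f0 [Xf0 Tf0]]]]].
have hXc := hX; case: hXc => hc X0 Xadd Xhom _.
have T0 : T (fun _ => 0) = (fun _ => 0).
  have e : (fun _ : K => (0:R)) \+ (fun _ => 0) = (fun _ => 0).
    by apply/funext => k /=; rewrite addr0.
  have := haddT _ _ X0 X0; rewrite e => h; apply/funext => k.
  by have := congr1 (fun F => F k) h => /= hk; lra.
have supT : forall f, X f -> supnorm f <= 1 -> supnorm (T f) <= `|M|.
  move=> f Xf sf; have s0 := X_sn_ge0 cK hX Xf.
  have := hM f Xf; have := ler_norm M; have := normr_ge0 M.
  move: (supnorm f) s0 sf => s s0 s1 h1 h2 h3; nra.
have Tpt : forall f k, X f -> `|T f k| <= supnorm (T f).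
  by move=> f k Xf; apply: le_supnorm; apply: cont_bnd => //; exact: hcT.
have hBJ : exists B, forall f, X f -> supnorm f <= 1 -> supnorm (f \+ T f) <= B.
  exists (1 + `|M|) => f Xf sf; apply: supnorm_le.
    by have := normr_ge0 M; lra.
  move=> k /=; apply: le_trans (ler_normD _ _) _; apply: lerD.
    exact: (ball_pt cK k hX Xf sf).
  by apply: le_trans (supT f Xf sf); exact: Tpt.
have hBT : exists B, forall f, X f -> supnorm f <= 1 -> supnorm (T f) <= B.
  by exists `|M|.
have s00 : supnorm (fun _ : K => (0:R)) <= 1.
  by apply: supnorm_le => // k; rewrite normr0.
have sn0 : forall f, X f -> 0 <= supnorm (T f).
  by move=> f Xf; apply: supnorm_ge0; apply: cont_bnd => //; exact: hcT.
have onT0 : 0 <= op_norm X T.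
  exact: le_trans (sn0 _ X0) (on_ub hBT X0 s00).
have hst := @star cK X hX hb T M g hcT haddT hhomT hM hrange hBJ.
pose s := supnorm f0.
have s0 : 0 <= s := X_sn_ge0 cK hX Xf0.
have sne : s != 0.
  apply/eqP => hs; apply: Tf0.
  have -> : f0 = (fun _ => 0).
    apply/funext => k; apply/eqP; rewrite -normr_eq0 eq_le normr_ge0 andbT.
    by rewrite -hs; apply: le_supnorm; exact: X_bnd hX Xf0.
  exact: T0.
pose f2 := fun k => s^-1 * f0 k.
have Xf2 : X f2 by exact: Xhom.
have sf2 : supnorm f2 <= 1.
  apply: supnorm_le => // k; rewrite /f2 normrM ger0_norm ?invr_ge0 //.
  rewrite ler_pdivrMl; last by rewrite lt0r sne.
  rewrite mulr1; apply: le_supnorm; exact: X_bnd hX Xf0.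
have Tf2 : T f2 <> (fun _ => 0).
  move=> h; apply: Tf0; apply/funext => k.
  have := congr1 (fun F => F k) h; rewrite /f2 hhomT //= => hk.
  by move/eqP: hk; rewrite mulf_eq0 invr_eq0 (negbTE sne) /= => /eqP.
have hf2 := hst f2 Xf2 sf2 Tf2.
apply/eqP; rewrite eq_le; apply/andP; split.
  apply: on_le => // f Xf sf; apply: supnorm_le; first lra.
  move=> k /=; apply: le_trans (ler_normD _ _) _; apply: lerD.
    exact: (ball_pt cK k hX Xf sf).
  apply: le_trans (Tpt f k Xf) _; exact: (on_ub hBT Xf sf).
have : op_norm X T <= op_norm X (fun f => f \+ T f) - 1.
  apply: on_le => // f Xf sf.
  case: (pselect (T f = fun _ => 0)) => hTf.
    rewrite hTf; apply: le_trans (_ : 0 <= _); first by apply: supnorm_le => // k; rewrite normr0.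
    have := sn0 f2 Xf2; lra.
  have := hst f Xf sf hTf; lra.
lra.
Qed.


Lemma AtoB (hK : hausdorff_space K) (cK : compact [set: K]) (X : set (K -> R))
  (hX : closed_subspace_CK X) (hd : daugavet_pair X) : propB X.
Proof.
move=> e phi U e0 hphi oU [u0 Uu0].
have hXc := hX; case: hXc => hc X0 Xadd Xhom _.
have hphic := hphi; case: hphic => -[hadd hhom [M hM]] dn1.
pose d := Num.min e 1 / 2.
have d0 : 0 < d by rewrite /d divr_gt0 // lt_min e0 ltr01.
have d1 : d <= 1 / 2 by rewrite /d ler_pM2r // ge_min lexx orbT.
have de : 2 * d <= e.
  by rewrite /d mulrC -mulrA mulVf // mulr1 ge_min lexx.
have nK := compact_normal hK cK.
have cU : closed (~` U) by exact: open_closedC.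
have c1 : closed [set u0] by apply: compact_closed => //; exact: compact_set1.
have disj : ~` U `&` [set u0] = set0.
  apply/seteqP; split => [x [hx hx0]|//]; apply: hx; by rewrite hx0.
have [gg [cg im0 im1 rg]] := urysohn_ext_itv nK cU c1 disj (@ltr01 R).
have grg : forall k, 0 <= gg k <= 1.
  move=> k; have := rg (gg k) (ex_intro2 _ _ k I erefl).
  by rewrite /= in_itv.
have g1 : gg u0 = 1 by apply: im1; exists u0.
pose T f := fun k => phi f * gg k.
have [B hB] := dual_bnd cK hX (proj1 hphi).
have supT : forall f, X f -> supnorm (T f) <= `|phi f|.
  move=> f Xf; apply: supnorm_le => // k; rewrite /T normrM.
  have := grg k => /andP[g0 g1']; rewrite (ger0_norm g0).
  by rewrite -[leRHS]mulr1; apply: ler_wpM2l.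
have rT : rank_one_op X T.
  split.
  - by move=> f Xf; exact: cont_scal.
  - by move=> f f' Xf Xf'; apply/funext => k; rewrite /T hadd //= mulrDl.
  - by move=> c f Xf; apply/funext => k; rewrite /T hhom // mulrA.
  - by exists M => f Xf; apply: le_trans (supT f Xf) (hM f Xf).
  exists gg; split => //.
  - by move=> h; have := congr1 (fun F => F u0) h; rewrite /= g1 => /eqP; rewrite oner_eq0.
  - by move=> f Xf; exists (phi f).
  have : 0 < dual_norm X phi by rewrite dn1.
  move/(dn_adh _ hX) => [f [Xf sf hf]]; exists f; split => // h.
  have := congr1 (fun F => F u0) h; rewrite /T /= g1 mulr1 => h0.
  by rewrite h0 normr0 ltxx in hf.
have hD := hd T rT.
have hBT : exists B, forall f, X f -> supnorm f <= 1 -> supnorm (T f) <= B.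
  by exists B => f Xf sf; apply: le_trans (supT f Xf) (hB f Xf sf).
have onT : 1 <= op_norm X T.
  rewrite -dn1; apply: dn_le => // f Xf sf.
  have -> : `|phi f| = `|T f u0| by rewrite /T g1 mulr1.
  apply: le_trans (on_ub hBT Xf sf); apply: le_supnorm; apply: cont_bnd => //.
  exact: cont_scal.
have : 2 - d < op_norm X (fun f => f \+ T f) by rewrite hD; lra.
move/(on_adh _ hX) => [f [Xf sf hf]].
have [k hk] : exists k, 2 - d < `|(f \+ T f) k| by apply: supnorm_adh => //; lra.
rewrite /= /T in hk.
have hfk := ball_pt cK k hX Xf sf.
have hpf : `|phi f| <= 1 by rewrite -dn1; exact: (dn_ub cK hX (proj1 hphi) Xf sf).
have [gk0 gk1] : 0 <= gg k /\ gg k <= 1 by have := grg k => /andP.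
have hA : `|f k + phi f * gg k| <= 1 + gg k.
  apply: le_trans (ler_normD _ _) _; rewrite normrM (ger0_norm gk0).
  apply: lerD => //; rewrite -[leRHS]mul1r; exact: ler_wpM2r.
have ggk : 1 - d < gg k by lra.
exists k.
  apply: contrapT => hU.
  have : gg k = 0 by apply: im0; exists k.
  lra.
have hBd : exists B', forall f, X f -> supnorm f <= 1 ->
    `|phi f + delta k f| <= B'.
  exists (B + 1) => f' Xf' sf'; apply: le_trans (ler_normD _ _) _.
  by apply: lerD; [exact: hB | exact: (ball_pt cK k hX Xf' sf')].
apply: lt_le_trans (dn_ub_gen hBd Xf sf).
rewrite /delta.
have E : f k + phi f * gg k = (phi f + f k) + (- (phi f * (1 - gg k))) by ring.
have := ler_normD (phi f + f k) (- (phi f * (1 - gg k))).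
rewrite -E normrN normrM (ger0_norm (_ : 0 <= 1 - gg k)); last lra.
have p : `|phi f| * (1 - gg k) <= 1 - gg k.
  by rewrite -[leRHS]mul1r; apply: ler_wpM2r => //; lra.
lra.
Qed.


Lemma cont_absadd (f : K -> R) (a : R) :
  continuous f -> continuous (fun w => `|a + f w|).
Proof.
move=> cf x.
have h1 : {for x, continuous (fun w => a + f w)}.
  have h0 : {for x, continuous (fun=> a)} by apply: cst_continuous.
  have := continuousD h0 (cf x); by [].
have := continuous_comp h1 (@norm_continuous R R^o (a + f x)); by [].
Qed.

Lemma BtoC (hK : hausdorff_space K) (cK : compact [set: K]) (X : set (K -> R))
  (hX : closed_subspace_CK X) (hb : propB X) :
  forall (phi : (K -> R) -> R) (U : set K),
    in_dual_sphere X phi -> open U -> U !=set0 ->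
    exists G : set K, [/\ G !=set0, closed G, Gdelta G, G `<=` U &
      forall u, G u -> dual_norm X (fun f => phi f + delta u f) = 2].
Proof.
move=> phi U hphi oU U0.
have hXc := hX; case: hXc => hc X0 Xadd Xhom _.
have [B hB] := dual_bnd cK hX (proj1 hphi).
have hpt : forall u, exists B', forall f, X f -> supnorm f <= 1 ->
    `|phi f + delta u f| <= B'.
  move=> u; exists (B + 1) => f' Xf' sf'; apply: le_trans (ler_normD _ _) _.
  by apply: lerD; [exact: hB | exact: (ball_pt cK u hX Xf' sf')].
pose D u := dual_norm X (fun f => phi f + delta u f).
have Dle2 : forall u, D u <= 2.
  move=> u; apply: dn_le => // f Xf sf; apply: le_trans (ler_normD _ _) _.
  have h1 : `|phi f| <= 1.
    by case: hphi => hd <-; exact: (dn_ub cK hX hd Xf sf).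
  by have := ball_pt cK u hX Xf sf; rewrite /delta; lra.
have oV : forall c, open [set v | c < D v].
  move=> c; rewrite openE => v hv.
  have [f [Xf sf hf]] := dn_adh _ hX hv.
  pose W := [set w | c < `|phi f + f w|].
  have oW : open W.
    have -> : W = (fun w => `|phi f + f w|) @^-1` [set x | c < x] by [].
    apply: open_comp; last exact: open_gt.
    by move=> x _; apply: cont_absadd; exact: hc.
  have nW : nbhs v W by apply: open_nbhs_nbhs; split.
  apply: filterS nW => w hw; rewrite /=.
  exact: lt_le_trans hw (dn_ub_gen (hpt w) Xf sf).
pose Vn (n : nat) := [set v | 2 - n.+1%:R^-1 < D v].
have step : forall n (W : set K), open W -> W !=set0 ->
    exists W', [/\ open W', W' !=set0 & closure W' `<=` W `&` Vn n].
  move=> n W oW [w0 Ww0].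
  have hn : 0 < n.+1%:R^-1 :> R by rewrite invr_gt0 ltr0n.
  have [u Wu hu] := hb _ phi W hn hphi oW (ex_intro _ w0 Ww0).
  have oWV : open (W `&` Vn n) := openI oW (oV _).
  have nb : nbhs u (W `&` Vn n) by apply: open_nbhs_nbhs; split.
  have nT : nbhs u [set: K] by exact: filterT.
  have [i ni ci] := compact_regular hK cK nT nb.
  exists i°; split.
  - exact: open_interior.
  - by exists u.
  - apply: subset_trans ci; apply: closureS; exact: interior_subset.
have step' : forall p : nat * set K, exists W', open p.2 -> p.2 !=set0 ->
    [/\ open W', W' !=set0 & closure W' `<=` p.2 `&` Vn p.1].
  move=> [n W]; case: (pselect (open W /\ W !=set0)) => [[oW W0]|hn].
    by have [W' hW'] := step n W oW W0; exists W'.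
  by exists set0 => oW W0; exfalso; apply: hn.
have [F hF] := choice step'.
pose Ws := fix Ws (n : nat) : set K :=
  if n is m.+1 then F (m.+1, Ws m) else F (0%N, U).
have hON : forall n, open (Ws n) /\ Ws n !=set0.
  elim=> [|n IH].
    by have [op2 ne2 _] := hF (0%N, U) oU U0.
  case: IH => op1 ne1.
  by have [op2 ne2 _] := hF (n.+1, Ws n) op1 ne1.
have h0 : closure (Ws 0%N) `<=` U `&` Vn 0%N.
  by have [_ _ c2] := hF (0%N, U) oU U0.
have hS : forall n, closure (Ws n.+1) `<=` Ws n `&` Vn n.+1.
  move=> n; have [op1 ne1] := hON n.
  by have [_ _ c2] := hF (n.+1, Ws n) op1 ne1.
have hV : forall n, closure (Ws n) `<=` Vn n.
  case=> [|n] x hx; first by have [] := h0 x hx.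
  by have [] := hS n x hx.
have mono : forall n k, closure (Ws (n + k)%N) `<=` closure (Ws n).
  move=> n; elim=> [|k IH]; first by rewrite addn0.
  rewrite addnS => x hx; apply: IH; apply: subset_closure.
  by have [] := hS _ x hx.
have mono' : forall n m, (n <= m)%N -> closure (Ws m) `<=` closure (Ws n).
  by move=> n m /subnKC <-; exact: mono.
pose G := \bigcap_n closure (Ws n).
exists G; split.
- pose FF := filter_from [set: nat] (fun n => closure (Ws n)).
  have FFf : Filter FF.
    apply: filter_from_filter; first by exists 0%N.
    move=> i j _ _; exists (maxn i j) => // x hx; split.
      by apply: (mono' i (maxn i j)) => //; rewrite leq_maxl.
    by apply: (mono' j (maxn i j)) => //; rewrite leq_maxr.
  have PF : ProperFilter FF.
    apply: filter_from_proper => n _.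
    have [_ [x hx]] := hON n; exists x; exact: subset_closure.
  have FT : FF [set: K] by exists 0%N.
  have [u [_ hu]] := cK FF PF FT.
  exists u => n _; apply: closed_closure => Bs nB.
  by apply: hu nB; exists n.
- by apply: closed_bigI => n _; exact: closed_closure.
- exists Ws; split; first by move=> n; have [] := hON n.
  apply/seteqP; split => x hx n _.
    by have [] := hS n x (hx n.+1 I).
  by apply: subset_closure; exact: hx.
- by move=> x hx; have [] := h0 x (hx 0%N I).
move=> u hu; apply/eqP; rewrite eq_le Dle2 /=.
rewrite leNgt; apply/negP => hlt.
have [k hk] := ltr_add_invr hlt.
have := hV k u (hu k I); rewrite /Vn /= => hk'.
move: hk hk' hlt; rewrite /D; move=> hk hk' hlt.
move: hk'; rewrite ltrBlDr => hk'; have := lt_trans hk' hk; by rewrite ltxx.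
Qed.

End Aux.

Theorem mainTheorem5 (R : realType) (K : topologicalType)
  (hK : hausdorff_space K) (cK : compact [set: K])
  (noiso : forall k : K, ~ open [set k])
  (X : set (K -> R)) (hX : closed_subspace_CK X) :
  [<-> daugavet_pair X;
       forall (e : R) (phi : (K -> R) -> R) (U : set K),
         0 < e -> in_dual_sphere X phi -> open U -> U !=set0 ->
         exists2 u, U u & dual_norm X (fun f => phi f + delta u f) > 2 - e;
       forall (phi : (K -> R) -> R) (U : set K),
         in_dual_sphere X phi -> open U -> U !=set0 ->
         exists G : set K, [/\ G !=set0, closed G, Gdelta G, G `<=` U &
           forall u, G u -> dual_norm X (fun f => phi f + delta u f) = 2]].
Proof.
tfae.
- by move=> ha; exact: (@AtoB R K hK cK X hX ha).
- by move=> hb; exact: (@BtoC R K hK cK X hX hb).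
move=> hc; apply: (@BtoA R K cK X hX) => e phi U e0 hphi oU U0.
have [G [[u Gu] _ _ GU hG]] := hc phi U hphi oU U0.
by exists u; [exact: GU | rewrite hG //; lra].
Qed.
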